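(* Define $F:\mathbb{N}\to\mathbb{N}$ by $F(n)=(n-1)/3$ if $n\equiv1\pmod 3$; $F(n)=n/2$ if $n\equiv 0$ or $n\equiv2\pmod 6$; $F(n)=(3n+1)/2$ if $n\equiv3$ or $n\equiv5\pmod6$. Then for every $n\in\mathbb{N}^+$ there exists $k\in\mathbb{N}$ with $F^k(n)=1$.
   Context: $F^k$ denotes the $k$-fold iterate of $F$. *)

(* Defs.v *)
From mathcomp Require Import all_boot.

Definition F (n : nat) : nat :=
  if n %% 3 == 1 then (n - 1) %/ 3
  else if (n %% 6 == 0) || (n %% 6 == 2) then n %/ 2
  else (3 * n + 1) %/ 2.

(* Main.v *)
Require Import Defs.
From mathcomp Require Import all_boot.
From mathcomp Require Import zify.

Lemma G1 Q : 0 < Q -> (2*Q-1) %% 3 != 1 -> F (2*Q-1) = 3*Q-1.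
Proof.
move=> HQ H; rewrite /F (negbTE H).
have -> : ((2 * Q - 1) %% 6 == 0) || ((2 * Q - 1) %% 6 == 2) = false.
  apply/negbTE; apply/negP => /orP [] /eqP; lia.
lia.
Qed.

Lemma G2 w R : 2*w+1 = 3*R -> 2 * F w + 1 = R.
Proof.
move=> H; rewrite /F.
have -> : (w %% 3 == 1) = true by apply/eqP; lia.
lia.
Qed.

Lemma G3 R : R %% 2 = 1 -> R %% 3 = 0 -> 2 * F (R - 1) + 1 = R.
Proof.
move=> H2 H3; rewrite /F.
have -> : ((R - 1) %% 3 == 1) = false by apply/negbTE/eqP; lia.
have -> : ((R - 1) %% 6 == 0) || ((R - 1) %% 6 == 2) = true.
  by apply/orP; right; apply/eqP; lia.
lia.
Qed.

Lemma P1 a : forall v, 0 < v -> (2^(a.+1)*v - 1) %% 3 != 1 ->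
  iter a.+1 F (2^(a.+1)*v - 1) = 3^(a.+1)*v - 1.
Proof.
elim: a => [|a IH] v Hv H.
  by rewrite /= !expn1 G1 // -(expn1 2).
rewrite iterSr.
have e : 2 ^ a.+2 * v - 1 = 2 * (2^a.+1 * v) - 1 by rewrite expnS mulnA.
have Hp : 0 < 2 ^ a.+1 * v by rewrite muln_gt0 expn_gt0 Hv.
rewrite e G1 //; last by rewrite -e.
have -> : 3 * (2 ^ a.+1 * v) - 1 = 2^a.+1 * (3 * v) - 1 by rewrite mulnCA.
rewrite IH.
- by rewrite [in RHS]expnS mulnCA mulnA.
- lia.
- apply/eqP; rewrite mulnCA. have := Hp. set T := 2 ^ a.+1 * v. lia.
Qed.

Lemma P2 j : forall w v, 2*w+1 = 3^(j.+1)*v -> 2 * iter j F w + 1 = 3*v.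
Proof.
elim: j => [|j IH] w v H.
  by rewrite /= H expn1.
rewrite iterSr; apply: IH; apply: G2; rewrite H expnS mulnA.
by [].
Qed.

Lemma dec2 x : 0 < x -> exists a v, odd v /\ x = 2^a * v.
Proof.
elim: x {-2}x (leqnn x) => [|N IH] x Hx Hx0; first lia.
case Ho: (odd x); first by exists 0, x; rewrite expn0 mul1n.
have Hx2 : x = 2 * x./2 by move: (odd_double_half x); rewrite Ho /= add0n -mul2n.
have [|| a [v [Hv E]]] := IH x./2; [lia|lia|].
exists a.+1, v; split=> //; rewrite expnS -mulnA -E //.
Qed.

Lemma step n : 1 < n -> exists k, 0 < iter k F n < n.
Proof.
move=> Hn.
case H1: (n %% 3 == 1).
  exists 1; rewrite /= /F H1; move/eqP: H1; lia.
case H2: ((n %% 6 == 0) || (n %% 6 == 2)).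
  exists 1; rewrite /= /F H1 H2; case/orP: H2 => /eqP; lia.
have Hodd : n %% 2 = 1.
  move: H2 => /negbT; rewrite negb_or => /andP [/eqP ? /eqP ?]; lia.
have [a [v [Hv E]]] : exists a v, odd v /\ n+1 = 2^a*v by apply: dec2; lia.
have Hv2 : v %% 2 = 1 by rewrite modn2 Hv.
case: a E => [|a] E.
  exfalso; rewrite expn0 mul1n in E; rewrite -E in Hv2; lia.
have Hv0 : 0 < v by lia.
have En : n = 2 ^ a.+1 * v - 1 by lia.
have Hc : (2^(a.+1)*v - 1) %% 3 != 1 by rewrite -En H1.
set R := 3 ^ a.+1 * v.
have HR2 : R %% 2 = 1.
  by rewrite /R modn2 oddM oddX Hv orbT.
have HR3 : R %% 3 = 0 by rewrite /R expnS -mulnA modnMr.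
have HR0 : 0 < R by rewrite /R muln_gt0 expn_gt0 Hv0.
have A1 := @P1 a v Hv0 Hc.
have A2 := @G3 R HR2 HR3.
have A3 := @P2 a (F (R-1)) v A2.
have A1' : iter a.+1 F n = R - 1 by rewrite En A1.
exists (a + (1 + a.+1)); rewrite !iterD A1' /=.
have HT : 2 <= 2 ^ a.+1 by rewrite expnS leq_pmulr // expn_gt0.
move: A3; set W := iter _ F _ => A3.
move: HT En Hn; set T := 2 ^ a.+1 => HT En Hn.
have [HT2|HT3] : T = 2 \/ 3 <= T by lia.
  rewrite HT2 in En *; lia.
have : 3 * v <= T * v by rewrite leq_mul2r HT3 orbT.
lia.
Qed.

Theorem mainTheorem10 : forall n : nat, 0 < n -> exists k : nat, iter k F n = 1.
Proof.
move=> n; elim: n {-2}n (leqnn n) => [|N IH] n Hn Hn0; first lia.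
case: (ltngtP n 1) => Hn1; first lia; last by exists 0; rewrite Hn1.
have [k1 /andP [Hm1 Hm2]] := @step n Hn1.
have [|| k2 Hk2] := IH (iter k1 F n); [lia|lia|].
by exists (k2 + k1); rewrite iterD.
Qed.
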